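(* Let $X$ be a Banach space and $Y$ a normed space over $K$, $M>0$, $F:X\to Y$ a map, and $\{F_n\}$ a sequence of continuous $M$-contraction operators from $X$ into $Y$ such that $F_n(x)\to F(x)$ in norm for every $x\in X$. If there is a positive constant $L$ with $\|F_n(x_1+x_2)\|_Y\le L\|F_n(x_1)+F_n(x_2)\|_Y$ for every $n$ and all $x_1,x_2\in X$, then $\{F_n\}$ is uniformly norm bounded (there is $c>0$ with $\|F_n\|_{B(X,Y)}\le c$ for all $n$) and $F\in B(X,Y)$.
   Context: $K$ is $\mathbb{R}$ or $\mathbb{C}$; operators are arbitrary maps. $\|F\|_{B(X,Y)}=\max\left(\sup_{x\neq0,x\in X}\frac{\|F(x)\|_Y}{\|x\|_X},\ \|F(0)\|_Y\right)$ and $B(X,Y)$ is the set of maps with this finite. $F$ is an $M$-contraction operator if $\|F(kx)\|_Y\le M|k|\,\|F(x)\|_Y$ for every scalar $k\neq0$ and every $x\neq0$. *)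

(* Defs.v *)
From mathcomp Require Import all_boot all_order all_algebra.
From mathcomp Require Import all_classical all_reals all_analysis.
From mathcomp Require Export complex.
Import Order.TTheory GRing.Theory Num.Theory.
Import numFieldNormedType.Exports.

Set Implicit Arguments.
Unset Strict Implicit.
Unset Printing Implicit Defensive.

Local Open Scope ring_scope.
Local Open Scope classical_set_scope.

(* ||F||_{B(X,Y)} <= c, literally:
   max( sup_{x <> 0} ||F x|| / ||x|| , ||F 0|| ) <= c *)
Definition opnorm_le (K : numFieldType) (X Y : normedModType K)
    (F : X -> Y) (c : K) : Prop :=
  (forall x : X, x != 0 -> `|F x| / `|x| <= c) /\ `|F 0| <= c.

Definition in_B (K : numFieldType) (X Y : normedModType K) (F : X -> Y) : Prop :=
  exists c : K, opnorm_le F c.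

Definition M_contraction (K : numFieldType) (X Y : normedModType K)
    (M : K) (F : X -> Y) : Prop :=
  forall (k : K) (x : X), k != 0 -> x != 0 -> `|F (k *: x)| <= M * `|k| * `|F x|.

Definition corollary1_stmt (K : numFieldType) : Prop :=
  forall (X : completeNormedModType K) (Y : normedModType K)
         (M : K) (F : X -> Y) (Fn : nat -> X -> Y),
    0 < M ->
    (forall n, continuous (Fn n)) ->
    (forall n, M_contraction M (Fn n)) ->
    (forall x : X, (fun n => Fn n x) @ \oo --> F x) ->
    forall L : K, 0 < L ->
    (forall n (x1 x2 : X), `|Fn n (x1 + x2)| <= L * `|Fn n x1 + Fn n x2|) ->
    (exists c : K, 0 < c /\ forall n, opnorm_le (Fn n) c) /\ in_B F.

(* Main.v *)
Require Import Defs.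
From mathcomp Require Import all_boot all_order all_algebra.
From mathcomp Require Import all_classical all_reals all_analysis.
From mathcomp Require Import complex.
From mathcomp Require Import ring lra zify.
Import Order.TTheory GRing.Theory Num.Theory.
Import numFieldNormedType.Exports.
Set Implicit Arguments.
Unset Strict Implicit.
Local Open Scope ring_scope.
Local Open Scope classical_set_scope.

Lemma closed_distle (K : numFieldType) (V : normedModType K) (u : V) (c : K) :
  0 <= c -> closed [set z : V | `|u - z| <= c].
Proof.
move=> c0; rewrite -openC openE => z /= Hz.
have cz : c < `|u - z|.
  by rewrite real_ltNge ?realE ?normr_ge0 ?c0 //; apply/negP.
apply/nbhs_ballP; exists (`|u - z| - c); first by rewrite /= subr_gt0.
move=> w; rewrite -ball_normE /= => hw huw.
have : `|u - z| < `|u - z|.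
  apply: (le_lt_trans (ler_distD w u z)).
  have -> : `|w - z| = `|z - w| by rewrite distrC.
  have : `|u - w| + `|z - w| < c + (`|u - z| - c) by apply: ler_ltD.
  by rewrite addrCA subrr addr0.
by rewrite ltxx.
Qed.

Lemma lim_norm_le (K : numFieldType) (Y : normedModType K) (u : nat -> Y) (l : Y) (c : K) :
  0 <= c -> u @ \oo --> l -> (forall n, `|u n| <= c) -> `|l| <= c.
Proof.
move=> c0 ul hu.
suff : [set z : Y | `|0 - z| <= c] l by rewrite /= sub0r normrN.
apply: (closed_cvg _ (@closed_distle _ _ 0 _ c0) _ l ul).
by apply: nearW => n /=; rewrite sub0r normrN.
Qed.

Lemma ptw_bound (K : numFieldType) (Y : normedModType K) (u : nat -> Y) (l : Y) :
  u @ \oo --> l -> exists B : K, 0 <= B /\ forall n, `|u n| <= B.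
Proof.
move=> /cvgrPdist_lt /(_ 1 ltr01) [N _ HN].
exists (`|l| + 1 + \sum_(i < N) `|u i|); split.
  by rewrite !addr_ge0 // sumr_ge0.
move=> n; case: (leqP N n) => nN.
  have h := HN n nN.
  have : `|u n| <= `|l| + `|l - u n|.
    have := ler_distD l (u n) 0; rewrite !subr0 distrC => /le_trans; apply.
    by rewrite addrC.
  move=> /le_trans; apply.
  rewrite -addrA lerD2l; apply: le_trans (ltW h) _.
  by rewrite lerDl sumr_ge0.
rewrite (bigD1 (Ordinal nN)) //= addrCA lerDl.
by rewrite !addr_ge0 // sumr_ge0.
Qed.

Lemma baire_cover (K : numFieldType) (X : completeNormedModType K)
  (Harch : forall x : K, 0 <= x -> exists n : nat, x <= n%:R)
  (A : nat -> set X) : (forall m, closed (A m)) -> (forall x, exists m, A m x) ->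
  exists m (x0 : X) (r : K), 0 < r /\ ball x0 r `<=` A m.
Proof.
move=> Acl Acov; apply: contrapT => Hno.
have step : forall m (x : X) (r : K), 0 < r -> exists ys : X * K,
   [/\ 0 < ys.2, ys.2 *+ 2 <= r, `|ys.1 - x| <= r - ys.2
     & forall z, `|ys.1 - z| <= ys.2 -> ~ A m z].
  move=> m x r r0.
  have r20 : 0 < r / 2 by rewrite divr_gt0.
  have [y [hy nAy]] : exists y, ball x (r/2) y /\ ~ A m y.
    apply: contrapT => hh; apply: Hno; exists m, x, (r/2); split => // y hy.
    by apply: contrapT => nAy; apply: hh; exists y.
  have : nbhs y (~` A m) by apply: open_nbhs_nbhs; split => //; rewrite openC.
  move=> /nbhs_ballP [s' /= s'0 hs'].
  have sr0 : 0 < s' + r by rewrite addr_gt0.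
  pose t := s' * r / (s' + r).
  have t0 : 0 < t by rewrite /t divr_gt0 // mulr_gt0.
  have tr : t <= r.
    rewrite /t ler_pdivrMr // mulrDr (mulrC r s') lerDl.
    by rewrite mulr_ge0 ?ltW.
  have ts : t <= s'.
    rewrite /t ler_pdivrMr // mulrDr lerDr.
    by rewrite mulr_ge0 ?ltW.
  pose s := t / 2.
  have s0 : 0 < s by rewrite /s divr_gt0.
  have s2 : s *+ 2 = t by rewrite /s -mulr_natr -mulrA mulVf ?mulr1 // pnatr_eq0.
  have ss : s < s' by apply: lt_le_trans ts; rewrite /s ltr_pdivrMr // ltr_pMr // ltr1n.
  have sr2 : s <= r / 2 by rewrite ler_pdivlMr // mulr_natr s2.
  exists (y, s); split => /=.
  - exact: s0.
  - by rewrite s2.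
  - rewrite lerBrDr distrC.
    have hy' : `|x - y| < r / 2 by move: hy; rewrite -ball_normE.
    apply: le_trans (lerD (ltW hy') sr2) _.
    by rewrite -splitr.
  - move=> z hz; apply: hs'; rewrite -ball_normE /=.
    exact: le_lt_trans hz ss.
have step' : forall p : nat * (X * K), exists q : X * K, 0 < p.2.2 ->
   [/\ 0 < q.2, q.2 *+ 2 <= p.2.2, `|q.1 - p.2.1| <= p.2.2 - q.2
     & forall z, `|q.1 - z| <= q.2 -> ~ A p.1 z].
  move=> [m [x r]] /=; case: (boolP (0 < r)) => r0.
    by have [q hq] := step m x r r0; exists q.
  by exists (0, 0).
have [f hf] := choice step'.
pose fix ar n := if n is p.+1 then f (p, ar p) else ((0:X), (1:K)).
pose a n := (ar n).1; pose r n := (ar n).2.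
have rpos : forall n, 0 < r n.
  elim => [|n IH] /=; first exact: ltr01.
  by have [] := hf (n, ar n) IH.
have P n : [/\ 0 < r n.+1, r n.+1 *+ 2 <= r n, `|a n.+1 - a n| <= r n - r n.+1
     & forall z, `|a n.+1 - z| <= r n.+1 -> ~ A n z].
  exact: (hf (n, ar n) (rpos n)).
have tele : forall n k, `|a (n + k)%N - a n| <= r n - r (n + k)%N.
  move=> n; elim => [|k IH]; first by rewrite addn0 !subrr normr0.
  rewrite addnS; have [_ _ h _] := P (n + k)%N.
  apply: le_trans (ler_distD (a (n+k)%N) _ _) _.
  have -> : r n - r (n + k).+1 = (r (n+k)%N - r (n+k).+1) + (r n - r (n+k)%N) by ring.
  exact: lerD.
have rbound : forall n, r n * n.+1%:R <= 1.
  elim => [|n IH]; first by rewrite mulr1.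
  have [_ h2 _ _] := P n.
  apply: le_trans IH.
  apply: (@le_trans _ _ (r n.+1 * (n.+1 * 2)%:R)).
    by rewrite ler_pM2l // ler_nat; lia.
  by rewrite natrM mulrA mulrAC ler_pM2r // mulr_natr.
have cauchy : cauchy_ex (a @ \oo).
  move=> e e0.
  have ei0 : 0 < e^-1 by rewrite invr_gt0.
  have [n hn] := Harch e^-1 (ltW ei0).
  have rne : r n < e.
    rewrite -(ltr_pM2r (ltr0Sn K n)); apply: le_lt_trans (rbound n) _.
    apply: (@le_lt_trans _ _ (e * n%:R)).
      by rewrite -[X in X <= _](mulfV (lt0r_neq0 e0)) ler_pM2l.
    by rewrite ltr_pM2l // ltr_nat.
  exists (a n); exists n => // m nm /=; rewrite -ball_normE /=.
  have := tele n (m - n)%N; rewrite subnKC // distrC => h.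
  apply: le_lt_trans h _; apply: le_lt_trans _ rne.
  by rewrite gerBl ltW.
have : cvg (a @ \oo) by apply: cauchy_cvg; apply: cauchy_exP.
move=> /cvg_ex [l al].
have [m Aml] := Acov l.
have [_ _ _ hz] := P m; apply: (hz l) Aml.
apply: (closed_cvg _ (@closed_distle _ _ (a m.+1) _ (ltW (rpos m.+1))) _ l al).
exists m.+1 => // k hk /=.
have := tele m.+1 (k - m.+1)%N; rewrite subnKC // => h.
by rewrite distrC; apply: le_trans h _; rewrite gerBl ltW.
Qed.

Lemma main_K (K : numFieldType)
  (Harch : forall x : K, 0 <= x -> exists n : nat, x <= n%:R) : corollary1_stmt K.
Proof.
move=> X Y M F Fn M0 Fcont Fctr Fcvg L L0 Fquasi.
pose A m := [set x : X | forall n, `|Fn n x| <= m%:R].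
have Acl : forall m, closed (A m).
  move=> m.
  have -> : A m = \bigcap_(n in setT) (Fn n @^-1` [set z : Y | `|0 - z| <= m%:R]).
    apply/seteqP; split => x /=.
      by move=> h n _ /=; rewrite sub0r normrN.
    by move=> h n; have := h n I; rewrite /= sub0r normrN.
  apply: closed_bigI => n _; apply: preimage_closed.
    by move=> x _; apply: Fcont.
  exact: (@closed_distle _ _ 0 _ (ler0n _ _)).
have Acov : forall x, exists m, A m x.
  move=> x; have [B [B0 hB]] := ptw_bound (Fcvg x).
  have [m hm] := Harch B B0.
  by exists m => n; apply: le_trans (hB n) hm.
have [m [x0 [r [r0 hball]]]] := baire_cover Harch Acl Acov.
have [B1 [B10 hB1]] := ptw_bound (Fcvg (- x0)).
have [B0 [B00 hB0]] := ptw_bound (Fcvg 0).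
pose Cst := L * (m%:R + B1).
have Cst0 : 0 <= Cst by apply: mulr_ge0; [exact: ltW | exact: addr_ge0].
have claim1 : forall n z, `|z| < r -> `|Fn n z| <= Cst.
  move=> n z hz.
  have -> : z = (z + x0) + (- x0) by rewrite addrK.
  apply: le_trans (Fquasi n _ _) _.
  rewrite ler_pM2l //; apply: le_trans (ler_normD _ _) _.
  apply: lerD => //.
  have : A m (z + x0).
    apply: hball; rewrite -ball_normE /=.
    by rewrite opprD addrCA subrr addr0 normrN.
  by apply.
have r2 : 0 < 2 / r by rewrite divr_gt0.
have claim2 : forall n x, x != 0 -> `|Fn n x| / `|x| <= M * Cst * (2 / r).
  move=> n x x0n.
  have nx0 : 0 < `|x| by rewrite normr_gt0.
  pose k := 2 * `|x| / r.
  have k0 : 0 < k by rewrite /k divr_gt0 // mulr_gt0.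
  pose z := k^-1 *: x.
  have xz : x = k *: z by rewrite /z scalerA mulfV ?lt0r_neq0 // scale1r.
  have z0 : z != 0 by rewrite /z scaler_eq0 negb_or invr_eq0 lt0r_neq0.
  have hz : `|z| < r.
    rewrite /z normrZ gtr0_norm ?invr_gt0 // /k.
    have -> : (2 * `|x| / r)^-1 * `|x| = r / 2.
      by field; rewrite ?lt0r_neq0 // pnatr_eq0.
    by rewrite ltr_pdivrMr // ltr_pMr // ltr1n.
  rewrite ler_pdivrMr //.
  rewrite {1}xz; apply: le_trans (Fctr n k z (lt0r_neq0 k0) z0) _.
  rewrite gtr0_norm // -mulrA.
  apply: le_trans (_ : M * (k * Cst) <= _).
    by rewrite ler_pM2l // ler_pM2l // claim1.
  suff -> : M * (k * Cst) = M * Cst * (2 / r) * `|x| by [].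
  by rewrite /k; field; rewrite lt0r_neq0.
pose c := M * Cst * (2 / r) + B0 + 1.
have h1 : 0 <= M * Cst * (2 / r).
  by apply: mulr_ge0; [apply: mulr_ge0; [exact: ltW|exact: Cst0] | exact: ltW].
have c0 : 0 < c.
  by rewrite /c; apply: lt_le_trans ltr01 _; rewrite lerDr; exact: addr_ge0.
have cle1 : M * Cst * (2 / r) <= c.
  by rewrite /c -addrA lerDl addr_ge0.
have cle0 : B0 <= c.
  by rewrite /c addrAC lerDr addr_ge0.
have hFn : forall n, opnorm_le (Fn n) c.
  move=> n; split; last exact: le_trans (hB0 n) cle0.
  by move=> x hx; apply: le_trans (claim2 n x hx) cle1.
split; first by exists c.
exists c; split.
  move=> x hx; rewrite ler_pdivrMr ?normr_gt0 //.
  apply: (lim_norm_le _ (Fcvg x)); first by apply: mulr_ge0; [exact: ltW | exact: normr_ge0].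
  move=> n; rewrite -ler_pdivrMr ?normr_gt0 //.
  by have [h _] := hFn n; apply: h.
apply: (lim_norm_le _ (Fcvg 0)); first exact: ltW.
by move=> n; have [_ h] := hFn n.
Qed.

Lemma archR (R : realType) : forall x : R, 0 <= x -> exists n : nat, x <= n%:R.
Proof. by move=> x _; exists (Num.truncn x).+1; exact: ltW (truncnS_gt x). Qed.

Lemma archC (R : realType) : forall x : (R[i])%C, 0 <= x -> exists n : nat, x <= n%:R.
Proof.
move=> x; rewrite lecE => /andP [/eqP hi hr].
have [n hn] := @archR R (complex.Re x) hr.
exists n.
have -> : (n%:R : (R[i])%C) = (n%:R)%:C%C by rewrite rmorph_nat.
rewrite lecE /=; apply/andP; split => //.
by rewrite hi.
Qed.

Theorem corollary1 (R : realType) :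
  corollary1_stmt R /\ corollary1_stmt (R[i])%C.
Proof.
split; apply: main_K; [exact: archR | exact: archC].
Qed.
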